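(* Let $b,t\in(0,1/9)$ and let $\mathcal S_t=\{S_1,S_2,S_3\}$ be the system on $\mathbb R$ given by $S_1(x)=tx$, $S_2(x)=bx$, $S_3(x)=(x+8)/9$, with attractor $K$ and $K_3=S_3(K)$. The following are equivalent: (i) for all positive integers $m,n$, $S_1^m(K_3)\cap S_2^n(K_3)=\varnothing$; (ii) $K=\{0\}\cup\bigcup_{m,n\ge0}S_1^mS_2^n(K_3)$, where the sets $S_1^mS_2^n(K_3)$, $(m,n)\in(\mathbb N\cup\{0\})^2$, are pairwise disjoint; (iii) for all positive integers $m,n$, $S_1^m(K)\cap S_2^n(K)=S_1^mS_2^n(K)$.
   Context: The attractor is the unique nonempty compact set $K\subset\mathbb R$ with $K=S_1(K)\cup S_2(K)\cup S_3(K)$; $S^m$ denotes the $m$-fold composition. *)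

(* Defs.v *)
From Stdlib Require Export Reals.
Open Scope R_scope.

Definition img (f : R -> R) (A : R -> Prop) : R -> Prop :=
  fun y => exists x, A x /\ y = f x.

Definition fpow (f : R -> R) (m : nat) : R -> R := Nat.iter m f.

Definition S1 (t : R) (x : R) : R := t * x.
Definition S2 (b : R) (x : R) : R := b * x.
Definition S3 (x : R) : R := (x + 8) / 9.

Definition is_attractor (t b : R) (K : R -> Prop) : Prop :=
  (exists x, K x) /\ compact K /\
  (forall y, K y <-> (img (S1 t) K y \/ img (S2 b) K y \/ img S3 K y)).

Definition K3 (K : R -> Prop) : R -> Prop := img S3 K.

Definition cond_i (t b : R) (K : R -> Prop) : Prop :=
  forall m n : nat, (1 <= m)%nat -> (1 <= n)%nat ->
    forall x, ~ (img (fpow (S1 t) m) (K3 K) x /\ img (fpow (S2 b) n) (K3 K) x).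

Definition piece (t b : R) (K : R -> Prop) (m n : nat) : R -> Prop :=
  img (fun x => fpow (S1 t) m (fpow (S2 b) n x)) (K3 K).

Definition cond_ii (t b : R) (K : R -> Prop) : Prop :=
  (forall x, K x <-> (x = 0 \/ exists m n : nat, piece t b K m n x)) /\
  (forall m n m' n' : nat, (m, n) <> (m', n') ->
     forall x, ~ (piece t b K m n x /\ piece t b K m' n' x)).

Definition cond_iii (t b : R) (K : R -> Prop) : Prop :=
  forall m n : nat, (1 <= m)%nat -> (1 <= n)%nat ->
    forall x, (img (fpow (S1 t) m) K x /\ img (fpow (S2 b) n) K x) <->
              img (fun y => fpow (S1 t) m (fpow (S2 b) n y)) K x.

(* Main.v *)
Require Import Defs.
From Stdlib Require Import Reals Lra Psatz Lia Arith Classical.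
Open Scope R_scope.

Lemma fpow1 (t x : R) m : fpow (S1 t) m x = t ^ m * x.
Proof. induction m; simpl; [ring|]. unfold fpow in *; simpl. rewrite IHm; unfold S1; ring. Qed.
Lemma fpow2 (t x : R) m : fpow (S2 t) m x = t ^ m * x.
Proof. induction m; simpl; [ring|]. unfold fpow in *; simpl. rewrite IHm; unfold S2; ring. Qed.

Definition hyps b t K := 0 < b < 1/9 /\ 0 < t < 1/9 /\ is_attractor t b K.

Lemma Kinv b t K : hyps b t K -> forall y, K y -> K (t*y) /\ K (b*y) /\ K ((y+8)/9).
Proof.
  intros [_ [_ [_ [_ HK]]]] y Hy. repeat split; apply HK.
  - left; exists y; auto.
  - right; left; exists y; auto.
  - right; right; exists y; auto.
Qed.

Lemma Kdec b t K : hyps b t K -> forall x, K x ->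
  (exists y, K y /\ x = t*y) \/ (exists y, K y /\ x = b*y) \/ (exists y, K y /\ x = (y+8)/9).
Proof.
  intros [_ [_ [_ [_ HK]]]] x Hx. apply HK in Hx.
  destruct Hx as [[y [H1 H2]]|[[y [H1 H2]]|[y [H1 H2]]]]; eauto.
Qed.

Lemma Kub b t K : hyps b t K -> forall x, K x -> x <= 1.
Proof.
  intros H. pose proof H as [Hb [Ht [[x0 Hx0] [Hc _]]]].
  assert (Hbd : bound K).
  { destruct (compact_P1 _ Hc) as [m [M HM]]. exists M. intros z Hz; apply HM; auto. }
  destruct (completeness K Hbd (ex_intro _ x0 Hx0)) as [s [Hs1 Hs2]].
  assert (s <= 1).
  { destruct (Rle_dec s 1) as [|Hn]; auto. exfalso.
    set (M := Rmax (Rmax (t*s) (b*s)) ((s+8)/9)).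
    assert (s <= M).
    { apply Hs2. intros y Hy.
      destruct (Kdec b t K H y Hy) as [[z [Hz ->]]|[[z [Hz ->]]|[z [Hz ->]]]];
      pose proof (Hs1 z Hz); unfold M.
      - eapply Rle_trans; [|apply Rmax_l]. eapply Rle_trans; [|apply Rmax_l]. nra.
      - eapply Rle_trans; [|apply Rmax_l]. eapply Rle_trans; [|apply Rmax_r]. nra.
      - eapply Rle_trans; [|apply Rmax_r]. lra. }
    unfold M in H0. repeat (apply Rmax_case_strong in H0 || idtac).
    revert H0. unfold M. repeat apply Rmax_case; nra. }
  intros x Hx. pose proof (Hs1 x Hx). lra.
Qed.

Lemma Klb b t K : hyps b t K -> forall x, K x -> 0 <= x.
Proof.
  intros H. pose proof H as [Hb [Ht [[x0 Hx0] [Hc _]]]].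
  set (E := fun z => K (- z)).
  assert (Hbd : bound E).
  { destruct (compact_P1 _ Hc) as [m [M HM]]. exists (-m). intros z Hz.
    pose proof (HM _ Hz). lra. }
  assert (HE : exists z, E z) by (exists (-x0); unfold E; rewrite Ropp_involutive; auto).
  destruct (completeness E Hbd HE) as [s [Hs1 Hs2]].
  assert (s <= 0).
  { destruct (Rle_dec s 0) as [|Hn]; auto. exfalso.
    assert (s <= Rmax (Rmax (t*s) (b*s)) ((s-8)/9)).
    { apply Hs2. intros y Hy. unfold E in Hy.
      destruct (Kdec b t K H _ Hy) as [[z [Hz Hq]]|[[z [Hz Hq]]|[z [Hz Hq]]]];
      assert (Hz' : E (-z)) by (unfold E; rewrite Ropp_involutive; auto);
      pose proof (Hs1 _ Hz').
      - eapply Rle_trans; [|apply Rmax_l]. eapply Rle_trans; [|apply Rmax_l]. nra.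
      - eapply Rle_trans; [|apply Rmax_l]. eapply Rle_trans; [|apply Rmax_r]. nra.
      - eapply Rle_trans; [|apply Rmax_r]. lra. }
    revert H0. repeat apply Rmax_case; nra. }
  intros x Hx. assert (E (-x)) by (unfold E; rewrite Ropp_involutive; auto).
  pose proof (Hs1 _ H1). lra.
Qed.

Lemma Kpow b t K : hyps b t K -> forall a c y, K y -> K (t^a*(b^c*y)).
Proof.
  intros H a c y Hy. induction a; simpl.
  - induction c; simpl. rewrite !Rmult_1_l; auto.
    rewrite Rmult_1_l in IHc. replace (1*(b*b^c*y)) with (b*(b^c*y)) by ring.
    apply (Kinv b t K H); auto.
  - replace (t*t^a*(b^c*y)) with (t*(t^a*(b^c*y))) by ring. apply (Kinv b t K H); auto.
Qed.

Lemma K0 b t K : hyps b t K -> K 0.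
Proof.
  intros H. pose proof H as [Hb [Ht [[x0 Hx0] [Hc _]]]].
  destruct (Classical_Prop.classic (K 0)) as [|Hn]; auto. exfalso.
  destruct (compact_P2 _ Hc 0 Hn) as [d Hd].
  assert (Rabs t < 1) by (rewrite Rabs_pos_eq; lra).
  destruct (pow_lt_1_zero t H0 d (cond_pos d)) as [N HN].
  specialize (HN N (le_n _)).
  apply (Hd (t^N*(b^0*x0))).
  - unfold disc. pose proof (Kub b t K H _ Hx0). pose proof (Klb b t K H _ Hx0).
    rewrite Rabs_pos_eq in HN by (apply pow_le; lra). simpl.
    rewrite Rminus_0_r, Rabs_pos_eq by (apply Rmult_le_pos; [apply pow_le|]; lra).
    pose proof (pow_le t N). nra.
  - apply Kpow; auto.
Qed.

Lemma K3b b t K : hyps b t K -> forall z, K3 K z -> K z /\ 8/9 <= z <= 1.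
Proof.
  intros H z [y [Hy ->]]. pose proof (Kub b t K H _ Hy). pose proof (Klb b t K H _ Hy).
  unfold S3. split; [apply (Kinv b t K H); auto| lra].
Qed.

Lemma Kdecomp b t K : hyps b t K -> forall x, K x ->
  x = 0 \/ exists a c z, K3 K z /\ x = t^a*(b^c*z).
Proof.
  intros H x Hx. pose proof H as [Hb [Ht _]].
  pose proof (Klb b t K H _ Hx) as Hx0.
  destruct (Req_dec x 0) as [|Hn]; [left; auto|right].
  assert (Hp : 0 < x) by lra.
  assert (Hl : Rabs (1/9) < 1) by (rewrite Rabs_pos_eq; lra).
  destruct (pow_lt_1_zero _ Hl x Hp) as [N HN]. specialize (HN N (le_n _)).
  rewrite Rabs_pos_eq in HN by (apply pow_le; lra).
  assert (HN' : 1 < x * 9^N).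
  { 
    assert (E : (1/9)^N * 9^N = 1) by (rewrite <- Rpow_mult_distr; replace (1/9*9) with 1 by field; apply pow1).
    pose proof (pow_lt 9 N ltac:(lra)). nra. }
  clear Hn HN. revert x Hx Hx0 Hp HN'. induction N; intros x Hx Hx0 Hp HN'.
  - pose proof (Kub b t K H _ Hx). simpl in HN'. lra.
  - pose proof (pow_lt 9 N ltac:(lra)). simpl in HN'.
    destruct (Kdec b t K H x Hx) as [[y [Hy ->]]|[[y [Hy ->]]|[y [Hy ->]]]].
    + assert (0 < y) by nra.
      destruct (IHN y Hy ltac:(lra) H1 ltac:(nra)) as [a [c [z [Hz ->]]]].
      exists (S a), c, z. split; auto. simpl; ring.
    + assert (0 < y) by nra.
      destruct (IHN y Hy ltac:(lra) H1 ltac:(nra)) as [a [c [z [Hz ->]]]].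
      exists a, (S c), z. split; auto. simpl; ring.
    + exists 0%nat, 0%nat, ((y+8)/9). split; [exists y; auto|simpl; ring].
Qed.

Lemma powb (x : R) p : 0 < x <= 1 -> 0 < x^p <= 1.
Proof. intros Hx; induction p; simpl; nra. Qed.
Lemma powb1 (x : R) p : 0 < x <= 1 -> (1 <= p)%nat -> x^p <= x.
Proof. intros Hx Hp. destruct p; [lia|]. simpl. pose proof (powb x p Hx). nra. Qed.

Lemma L0 b t K : hyps b t K -> forall p q z z', K3 K z -> K3 K z' ->
  z = t^p*(b^q*z') -> p = 0%nat /\ q = 0%nat.
Proof.
  intros H p q z z' Hz Hz' E. pose proof H as [Hb [Ht _]].
  apply (K3b b t K H) in Hz. apply (K3b b t K H) in Hz'.
  pose proof (powb t p ltac:(lra)). pose proof (powb b q ltac:(lra)).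
  destruct (Nat.eq_dec p 0) as [Hp|Hp]; destruct (Nat.eq_dec q 0) as [Hq|Hq]; auto; exfalso.
  all: assert (P : t^p*b^q <= 1/9).
  all: try (subst p; pose proof (powb1 b q ltac:(lra) ltac:(lia)); simpl; lra).
  all: try (pose proof (powb1 t p ltac:(lra) ltac:(lia)); nra).
  all: assert (0 <= t^p*b^q) by nra.
  all: rewrite <- Rmult_assoc in E; nra.
Qed.

Lemma L1 b t K : hyps b t K -> cond_i t b K -> forall p q z z', (1 <= p)%nat -> (1 <= q)%nat ->
  K3 K z -> K3 K z' -> t^p*z = b^q*z' -> False.
Proof.
  intros H Hi p q z z' Hp Hq Hz Hz' E.
  apply (Hi p q Hp Hq (t^p*z)). split.
  - exists z; split; auto; rewrite fpow1; auto.
  - exists z'; split; auto; rewrite fpow2; auto.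
Qed.

Lemma keyA b t K : hyps b t K -> cond_i t b K -> forall a c a' c' z z', (a <= a')%nat ->
  K3 K z -> K3 K z' -> t^a*(b^c*z) = t^a'*(b^c'*z') -> a = a' /\ c = c'.
Proof.
  intros H Hi a c a' c' z z' Ha Hz Hz' E. pose proof H as [Hb [Ht _]].
  pose proof (powb t a ltac:(lra)). pose proof (powb b c ltac:(lra)).
  pose proof (powb b c' ltac:(lra)).
  replace a' with (a + (a'-a))%nat in E by lia. rewrite pow_add in E.
  set (d := (a'-a)%nat) in *.
  destruct (le_lt_dec c c') as [Hc|Hc].
  - replace c' with (c + (c'-c))%nat in E by lia. rewrite pow_add in E.
    set (e := (c'-c)%nat) in *.
    assert (E2 : z = t^d*(b^e*z')).
    { apply (Rmult_eq_reg_l (t^a*b^c)); [|nra]. transitivity (t^a*(b^c*z)); [ring|].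
      rewrite E. ring. }
    destruct (L0 b t K H _ _ _ _ Hz Hz' E2). unfold d, e in *. lia.
  - replace c with (c' + (c-c'))%nat in E by lia. rewrite pow_add in E.
    set (e := (c-c')%nat) in *.
    assert (E2 : b^e*z = t^d*z').
    { apply (Rmult_eq_reg_l (t^a*b^c')); [|nra]. transitivity (t^a*(b^c'*b^e*z)); [ring|].
      rewrite E. ring. }
    exfalso. destruct d as [|d].
    + simpl in E2. rewrite Rmult_1_l in E2.
      assert (E3 : z' = t^0*(b^e*z)) by (simpl; lra).
      destruct (L0 b t K H 0 e z' z Hz' Hz E3) as [_ He]. unfold e in *; lia.
    + apply (L1 b t K H Hi (S d) e z' z); try lra; try lia; auto; unfold e; lia.
Qed.

Lemma key b t K : hyps b t K -> cond_i t b K -> forall a c a' c' z z',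
  K3 K z -> K3 K z' -> t^a*(b^c*z) = t^a'*(b^c'*z') -> a = a' /\ c = c'.
Proof.
  intros H Hi a c a' c' z z' Hz Hz' E. destruct (le_lt_dec a a').
  - exact (keyA b t K H Hi a c a' c' z z' ltac:(lia) Hz Hz' E).
  - destruct (keyA b t K H Hi a' c' a c z' z); auto; lia.
Qed.

Lemma pieceE t b K m n x : piece t b K m n x <-> exists z, K3 K z /\ x = t^m*(b^n*z).
Proof.
  unfold piece, img. split; intros [z [Hz E]]; exists z; split; auto;
  rewrite ?fpow1, ?fpow2 in *; auto.
Qed.

Lemma imgE1 t K m x : img (fpow (S1 t) m) K x <-> exists z, K z /\ x = t^m*z.
Proof. unfold img. split; intros [z [Hz E]]; exists z; rewrite ?fpow1 in *; auto. Qed.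
Lemma imgE2 t K m x : img (fpow (S2 t) m) K x <-> exists z, K z /\ x = t^m*z.
Proof. unfold img. split; intros [z [Hz E]]; exists z; rewrite ?fpow2 in *; auto. Qed.
Lemma imgE12 t b K m n x : img (fun y => fpow (S1 t) m (fpow (S2 b) n y)) K x
   <-> exists z, K z /\ x = t^m*(b^n*z).
Proof. unfold img. split; intros [z [Hz E]]; exists z; rewrite ?fpow1, ?fpow2 in *; auto. Qed.

Lemma i_ii b t K : hyps b t K -> cond_i t b K -> cond_ii t b K.
Proof.
  intros H Hi. split.
  - intros x; split.
    + intros Hx. destruct (Kdecomp b t K H x Hx) as [|[a [c [z [Hz E]]]]]; [left; auto|].
      right. exists a, c. apply pieceE. eauto.
    + intros [->|[m [n Hp]]]; [apply (K0 b t K H)|].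
      apply pieceE in Hp. destruct Hp as [z [Hz ->]]. apply Kpow; auto. apply (K3b b t K H); auto.
  - intros m n m' n' Hne x [P1 P2]. apply pieceE in P1, P2.
    destruct P1 as [z [Hz ->]]. destruct P2 as [z' [Hz' E]].
    destruct (key b t K H Hi m n m' n' z z' Hz Hz' E). subst. auto.
Qed.

Lemma ii_i b t K : hyps b t K -> cond_ii t b K -> cond_i t b K.
Proof.
  intros H [_ Hd] m n Hm Hn x [P1 P2]. apply imgE1 in P1. apply imgE2 in P2.
  destruct P1 as [z [Hz E1]]. destruct P2 as [z' [Hz' E2]].
  apply (Hd m 0%nat 0%nat n (ltac:(intros Heq; injection Heq; lia)) x).
  split; apply pieceE; [exists z | exists z']; split; auto; simpl; lra.
Qed.

Lemma i_iii b t K : hyps b t K -> cond_i t b K -> cond_iii t b K.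
Proof.
  intros H Hi m n Hm Hn x. rewrite imgE1, imgE2, imgE12. split.
  - intros [[y [Hy E1]] [y' [Hy' E2]]].
    destruct (Kdecomp b t K H y Hy) as [->|[a [c [z [Hz Ey]]]]].
    { exists 0; split; [apply (K0 b t K H)|]. rewrite E1. ring. }
    destruct (Kdecomp b t K H y' Hy') as [->|[a' [c' [z' [Hz' Ey']]]]].
    { exists 0; split; [apply (K0 b t K H)|]. rewrite E2. ring. }
    assert (E : t^(m+a)*(b^c*z) = t^a'*(b^(n+c')*z')).
    { rewrite !pow_add. transitivity x; [rewrite E1, Ey; ring| rewrite E2, Ey'; ring]. }
    destruct (key b t K H Hi _ _ _ _ z z' Hz Hz' E) as [_ Hc].
    exists (t^a*(b^c'*z)). split; [apply (Kpow b t K H); apply (K3b b t K H); auto|].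
    rewrite E1, Ey, Hc, pow_add. ring.
  - intros [w [Hw ->]]. split.
    + exists (b^n*w). split; auto. replace (b^n*w) with (t^0*(b^n*w)) by (simpl; ring). apply Kpow; auto.
    + exists (t^m*w). split; [|ring]. replace (t^m*w) with (t^m*(b^0*w)) by (simpl; ring). apply Kpow; auto.
Qed.

Lemma iii_i b t K : hyps b t K -> cond_iii t b K -> cond_i t b K.
Proof.
  intros H Hiii m n Hm Hn x [P1 P2]. pose proof H as [Hb [Ht _]].
  apply imgE1 in P1. apply imgE2 in P2.
  destruct P1 as [z [Hz E1]]. destruct P2 as [z' [Hz' E2]].
  assert (Q : img (fun y => fpow (S1 t) m (fpow (S2 b) n y)) K x).
  { apply Hiii; auto. rewrite imgE1, imgE2. split.
    - exists z; split; auto; apply (K3b b t K H); auto.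
    - exists z'; split; auto; apply (K3b b t K H); auto. }
  apply imgE12 in Q. destruct Q as [w [Hw E3]].
  pose proof (Kub b t K H _ Hw). pose proof (Klb b t K H _ Hw).
  apply (K3b b t K H) in Hz.
  pose proof (powb t m ltac:(lra)). pose proof (powb b n ltac:(lra)).
  pose proof (powb1 b n ltac:(lra) Hn).
  assert (z = b^n*w).
  { apply (Rmult_eq_reg_l (t^m)); [|lra]. lra. }
  nra.
Qed.

Theorem proposition8 (b t : R) (K : R -> Prop) :
  0 < b < 1/9 -> 0 < t < 1/9 -> is_attractor t b K ->
  (cond_i t b K <-> cond_ii t b K) /\ (cond_i t b K <-> cond_iii t b K).
Proof.
  intros Hb Ht HK. assert (H : hyps b t K) by (split; auto).
  split; split.
  - apply i_ii; auto.
  - apply ii_i; auto.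
  - apply i_iii; auto.
  - apply iii_i; auto.
Qed.
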